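(* Fix $N>0$, $\tilde\lambda=(\tilde\lambda_{\dot1},\tilde\lambda_{\dot2})\in\mathbb{C}^2$ and integers $k,l\ge0$. Define on $\mathbb{C}^2\setminus\{0\}$ $$\phi_{k,l}=\frac{k!\,l!}{(k+l)!}\sum_{j=0}^{\min(k,l)}\frac{(k+l-j)!}{j!\,(k-j)!\,(l-j)!}\Big(\frac{N}{\|u\|^2}\Big)^j[u\,\tilde\lambda]^k[\hat u\,\tilde\lambda]^l .$$ Then $\Delta\phi_{k,l}=0$ on $\mathbb{C}^2\setminus\{0\}$, where $\Delta$ is the Laplace–Beltrami operator of the Burns metric $g_N$; moreover $\phi_{k,l}=[u\,\tilde\lambda]^k[\hat u\,\tilde\lambda]^l\,(1+O(\|u\|^{-2}))$ as $\|u\|\to\infty$, and $\phi_{k,l}$ reduces to $[u\,\tilde\lambda]^k[\hat u\,\tilde\lambda]^l$ at $N=0$. Equivalently, with $\chi=\|u\|^2/N$, $\phi_{k,l}=\frac{k!l!}{(k+l)!}\chi^{-l}P^{(k-l,0)}_l(1+2\chi)[u\,\tilde\lambda]^k[\hat u\,\tilde\lambda]^l$ for $k\ge l$ (and symmetrically for $k<l$), $P^{(a,b)}_n$ being Jacobi polynomials.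
   Context: Fix $N>0$. On $\mathbb{C}^2\setminus\{0\}$ with coordinates $u=(u^{\dot1},u^{\dot2})$ write $\|u\|^2=|u^{\dot1}|^2+|u^{\dot2}|^2$ and $\hat u=(-\bar u^{\dot2},\bar u^{\dot1})$. The Burns metric is $g_N=2(|du^{\dot1}|^2+|du^{\dot2}|^2)+2N|u^{\dot2}du^{\dot1}-u^{\dot1}du^{\dot2}|^2/\|u\|^4$; its Laplace–Beltrami operator is explicitly $$\Delta=\frac{2}{1+N/\|u\|^2}\Big(\sum_{a}\frac{\partial^2}{\partial u^{a}\partial\bar u^{a}}+\frac{N}{\|u\|^4}\Big(\sum_a u^a\frac{\partial}{\partial u^a}\Big)\Big(\sum_b\bar u^b\frac{\partial}{\partial\bar u^b}\Big)\Big).$$ For $\tilde\lambda\in\mathbb{C}^2$, $[u\,\tilde\lambda]:=u^{\dot1}\tilde\lambda_{\dot1}+u^{\dot2}\tilde\lambda_{\dot2}$ and $[\hat u\,\tilde\lambda]:=-\bar u^{\dot2}\tilde\lambda_{\dot1}+\bar u^{\dot1}\tilde\lambda_{\dot2}$. *)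

(* Defs.v *)
From Stdlib Require Import Reals Factorial.
From Coquelicot Require Import Coquelicot.
Open Scope R_scope.

Definition pt := (C * C)%type.

Definition norm2 (u : pt) : R := Cmod (fst u) ^ 2 + Cmod (snd u) ^ 2.
Definition normu (u : pt) : R := sqrt (norm2 u).

(* [u lam] and [hat u lam], hat u = (- conj u2, conj u1) *)
Definition brk (u lam : pt) : C :=
  (fst u * fst lam + snd u * snd lam)%C.
Definition hbrk (u lam : pt) : C :=
  (- Cconj (snd u) * fst lam + Cconj (fst u) * snd lam)%C.

(* real directional derivative of a C-valued function on C^2 = R^4,
   along the real direction v, computed on real and imaginary parts *)
Definition dirD (f : pt -> C) (v : pt) (p : pt) : C :=
  (Derive (fun t : R => Re (f (fst p + RtoC t * fst v, snd p + RtoC t * snd v)%C)) 0,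
   Derive (fun t : R => Im (f (fst p + RtoC t * fst v, snd p + RtoC t * snd v)%C)) 0).

Definition e1 : pt := (RtoC 1, RtoC 0).
Definition e2 : pt := (RtoC 0, RtoC 1).
Definition ie1 : pt := (Ci, RtoC 0).
Definition ie2 : pt := (RtoC 0, Ci).

Definition d1 (f : pt -> C) (p : pt) : C := (/2 * (dirD f e1 p - Ci * dirD f ie1 p))%C.
Definition d2 (f : pt -> C) (p : pt) : C := (/2 * (dirD f e2 p - Ci * dirD f ie2 p))%C.
Definition db1 (f : pt -> C) (p : pt) : C := (/2 * (dirD f e1 p + Ci * dirD f ie1 p))%C.
Definition db2 (f : pt -> C) (p : pt) : C := (/2 * (dirD f e2 p + Ci * dirD f ie2 p))%C.

Definition EulerBar (f : pt -> C) (q : pt) : C :=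
  (Cconj (fst q) * db1 f q + Cconj (snd q) * db2 f q)%C.

Definition BurnsLaplacian (N : R) (f : pt -> C) (p : pt) : C :=
  (RtoC (2 / (1 + N / norm2 p)) *
   (d1 (db1 f) p + d2 (db2 f) p
    + RtoC (N / (norm2 p ^ 2)) *
      (fst p * d1 (EulerBar f) p + snd p * d2 (EulerBar f) p)))%C.

Definition factR (n : nat) : R := INR (fact n).

Definition mono (lam : pt) (k l : nat) (u : pt) : C :=
  (brk u lam ^ k * hbrk u lam ^ l)%C.

Definition phiCoef (N : R) (k l : nat) (u : pt) : R :=
  factR k * factR l / factR (k + l) *
  sum_f_R0 (fun j => factR (k + l - j) / (factR j * factR (k - j) * factR (l - j))
                      * (N / norm2 u) ^ j) (Nat.min k l).

Definition phi (N : R) (lam : pt) (k l : nat) (u : pt) : C :=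
  (RtoC (phiCoef N k l u) * mono lam k l u)%C.

Definition binomR (m s : nat) : R := factR m / (factR s * factR (m - s)).

Definition jacobiP (n a b : nat) (x : R) : R :=
  sum_f_R0 (fun s => binomR (n + a) (n - s) * binomR (n + b) s
                     * ((x - 1) / 2) ^ s * ((x + 1) / 2) ^ (n - s)) n.

(* Main.v *)
Require Import Defs.
From Stdlib Require Import Reals Lra.
From Coquelicot Require Import Coquelicot.
Open Scope R_scope.

Lemma Dconst c x : derivable_pt_lim (fun _ => c) x 0.
Proof. apply derivable_pt_lim_const. Qed.
Lemma Did x : derivable_pt_lim (fun t => t) x 1.
Proof. apply derivable_pt_lim_id. Qed.
Lemma Dplus f g x a b : derivable_pt_lim f x a -> derivable_pt_lim g x b ->
  derivable_pt_lim (fun t => f t + g t) x (a + b).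
Proof. intros; now apply (derivable_pt_lim_plus f g). Qed.
Lemma Dminus f g x a b : derivable_pt_lim f x a -> derivable_pt_lim g x b ->
  derivable_pt_lim (fun t => f t - g t) x (a - b).
Proof. intros; now apply (derivable_pt_lim_minus f g). Qed.
Lemma Dopp f x a : derivable_pt_lim f x a -> derivable_pt_lim (fun t => - f t) x (- a).
Proof. intros; now apply (derivable_pt_lim_opp f). Qed.
Lemma Dmult f g x a b : derivable_pt_lim f x a -> derivable_pt_lim g x b ->
  derivable_pt_lim (fun t => f t * g t) x (a * g x + f x * b).
Proof. intros; now apply (derivable_pt_lim_mult f g). Qed.
Lemma Dcomp f h x a b : derivable_pt_lim f x a -> derivable_pt_lim h (f x) b ->
  derivable_pt_lim (fun t => h (f t)) x (b * a).
Proof. intros; now apply (derivable_pt_lim_comp f h). Qed.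
Lemma Deq f x a b : derivable_pt_lim f x a -> a = b -> derivable_pt_lim f x b.
Proof. intros H <-; exact H. Qed.
Lemma Dext f g x a : (forall t, f t = g t) -> derivable_pt_lim f x a -> derivable_pt_lim g x a.
Proof.
  intros H D. apply is_derive_Reals. apply is_derive_Reals in D.
  eapply is_derive_ext; [exact H| exact D].
Qed.

Definition cder (g : R -> C) (l : C) : Prop :=
  derivable_pt_lim (fun t => Re (g t)) 0 (Re l) /\ derivable_pt_lim (fun t => Im (g t)) 0 (Im l).

Lemma cder_ext g1 g2 l : (forall t, g1 t = g2 t) -> cder g1 l -> cder g2 l.
Proof.
  intros H [H1 H2]; split.
  - eapply Dext; [|exact H1]; intros t; simpl; now rewrite H.
  - eapply Dext; [|exact H2]; intros t; simpl; now rewrite H.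
Qed.

Lemma cder_ext_loc g1 g2 l : locally 0 (fun t => g1 t = g2 t) -> cder g1 l -> cder g2 l.
Proof.
  intros H [H1 H2]; split; apply is_derive_Reals.
  - apply is_derive_Reals in H1. eapply is_derive_ext_loc; [|exact H1].
    destruct H as [e He]; exists e; intros y Hy; now rewrite He.
  - apply is_derive_Reals in H2. eapply is_derive_ext_loc; [|exact H2].
    destruct H as [e He]; exists e; intros y Hy; now rewrite He.
Qed.

Lemma cder_eq g l1 l2 : cder g l1 -> l1 = l2 -> cder g l2.
Proof. intros H <-; exact H. Qed.

Lemma cder_const c : cder (fun _ => c) (RtoC 0).
Proof. split; simpl; apply Dconst. Qed.

Lemma cder_plus g h a b : cder g a -> cder h b -> cder (fun t => g t + h t)%C (a + b)%C.
Proof. intros [Ga Gb] [Ha Hb]; split; simpl; apply Dplus; auto. Qed.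

Lemma cder_opp g a : cder g a -> cder (fun t => - g t)%C (- a)%C.
Proof. intros [Ga Gb]; split; simpl; apply Dopp; auto. Qed.

Lemma cder_mult g h a b : cder g a -> cder h b ->
  cder (fun t => g t * h t)%C (a * h 0 + g 0 * b)%C.
Proof.
  intros [Ga Gb] [Ha Hb]; split; simpl.
  - eapply Deq. apply Dminus; apply Dmult; eauto. unfold Re, Im in *; simpl; ring.
  - eapply Deq. apply Dplus; apply Dmult; eauto. unfold Re, Im in *; simpl; ring.
Qed.

Lemma cder_conj g a : cder g a -> cder (fun t => Cconj (g t)) (Cconj a).
Proof. intros [Ga Gb]; split; simpl; auto. apply Dopp; auto. Qed.

Lemma cder_lin (c v : C) : cder (fun t => c + RtoC t * v)%C v.
Proof.
  split; simpl.
  - eapply Deq. apply Dplus. apply Dconst. apply Dminus; apply Dmult; try apply Did; apply Dconst.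
    unfold Re, Im; simpl; ring.
  - eapply Deq. apply Dplus. apply Dconst. apply Dplus; apply Dmult; try apply Did; apply Dconst.
    unfold Re, Im; simpl; ring.
Qed.

Lemma cder_pow g a n : cder g a ->
  cder (fun t => g t ^ n)%C (RtoC (INR n) * g 0 ^ (Nat.pred n) * a)%C.
Proof.
  intros G. induction n.
  - eapply cder_ext with (g1 := fun _ => RtoC 1). reflexivity.
    eapply cder_eq. apply cder_const. simpl. apply injective_projections; simpl; ring.
  - eapply cder_ext with (g1 := fun t => (g t * g t ^ n)%C). reflexivity.
    eapply cder_eq. apply (cder_mult _ _ _ _ G IHn).
    rewrite S_INR, RtoC_plus. destruct n; simpl; ring.
Qed.

Lemma cder_realcomp (r : R -> R) (h : R -> R) a b :
  cder (fun t => RtoC (r t)) a -> derivable_pt_lim h (r 0) b ->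
  cder (fun t => RtoC (h (r t))) (RtoC b * a)%C.
Proof.
  intros [G1 G2] H; split; unfold Re, Im in *; simpl in *.
  - eapply Deq. apply Dcomp; eauto. ring.
  - 
    assert (snd a = 0).
    { eapply uniqueness_limite; [exact G2| apply Dconst]. }
    rewrite H0. eapply Deq. apply Dconst. ring.
Qed.

Definition line (p v : pt) (t : R) : pt :=
  (fst p + RtoC t * fst v, snd p + RtoC t * snd v)%C.

Definition lin4 (a1 a2 b1 b2 : C) (v : pt) : C :=
  (a1 * fst v + a2 * snd v + b1 * Cconj (fst v) + b2 * Cconj (snd v))%C.

Definition W (f : pt -> C) (p : pt) (a1 a2 b1 b2 : C) : Prop :=
  forall v, cder (fun t => f (line p v t)) (lin4 a1 a2 b1 b2 v).

Lemma line0 p v : line p v 0 = p.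
Proof.
  destruct p as [p1 p2]; unfold line; simpl.
  f_equal; apply injective_projections; simpl; ring.
Qed.

Lemma W_eq f p a1 a2 b1 b2 a1' a2' b1' b2' : W f p a1 a2 b1 b2 ->
  a1 = a1' -> a2 = a2' -> b1 = b1' -> b2 = b2' -> W f p a1' a2' b1' b2'.
Proof. intros H <- <- <- <-; exact H. Qed.

Lemma W_ext f g p a1 a2 b1 b2 : (forall q, f q = g q) -> W f p a1 a2 b1 b2 -> W g p a1 a2 b1 b2.
Proof. intros E H v. eapply cder_ext; [|apply H]. intros; simpl; now rewrite E. Qed.

Lemma W_const c p : W (fun _ => c) p 0 0 0 0.
Proof.
  intros v. eapply cder_eq. apply cder_const. unfold lin4.
  apply injective_projections; simpl; ring.
Qed.

Lemma W_plus f g p a1 a2 b1 b2 c1 c2 d1 d2 : W f p a1 a2 b1 b2 -> W g p c1 c2 d1 d2 ->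
  W (fun q => f q + g q)%C p (a1 + c1) (a2 + c2) (b1 + d1) (b2 + d2).
Proof.
  intros F G v. eapply cder_eq. apply cder_plus; [apply F|apply G].
  unfold lin4. ring.
Qed.

Lemma W_opp f p a1 a2 b1 b2 : W f p a1 a2 b1 b2 ->
  W (fun q => - f q)%C p (- a1) (- a2) (- b1) (- b2).
Proof.
  intros F v. eapply cder_eq. apply cder_opp; apply F.
  unfold lin4. ring.
Qed.

Lemma W_mult f g p a1 a2 b1 b2 c1 c2 d1 d2 : W f p a1 a2 b1 b2 -> W g p c1 c2 d1 d2 ->
  W (fun q => f q * g q)%C p (a1 * g p + f p * c1) (a2 * g p + f p * c2)
      (b1 * g p + f p * d1) (b2 * g p + f p * d2).
Proof.
  intros F G v. eapply cder_eq. apply cder_mult; [apply F|apply G].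
  cbv beta. rewrite line0. unfold lin4. ring.
Qed.

Lemma W_pow f p a1 a2 b1 b2 n : W f p a1 a2 b1 b2 ->
  W (fun q => f q ^ n)%C p (RtoC (INR n) * f p ^ (Nat.pred n) * a1)
     (RtoC (INR n) * f p ^ (Nat.pred n) * a2)
     (RtoC (INR n) * f p ^ (Nat.pred n) * b1) (RtoC (INR n) * f p ^ (Nat.pred n) * b2).
Proof.
  intros F v. eapply cder_eq. apply cder_pow; apply F.
  cbv beta. rewrite line0. unfold lin4. ring.
Qed.

Lemma W_fst p : W (fun q => fst q) p 1 0 0 0.
Proof.
  intros v. eapply cder_eq. apply cder_lin. unfold lin4.
  apply injective_projections; simpl; ring.
Qed.

Lemma W_snd p : W (fun q => snd q) p 0 1 0 0.
Proof.
  intros v. eapply cder_eq. apply cder_lin. unfold lin4.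
  apply injective_projections; simpl; ring.
Qed.

Lemma W_cfst p : W (fun q => Cconj (fst q)) p 0 0 1 0.
Proof.
  intros v. eapply cder_eq. apply cder_conj, cder_lin. unfold lin4.
  apply injective_projections; simpl; ring.
Qed.

Lemma W_csnd p : W (fun q => Cconj (snd q)) p 0 0 0 1.
Proof.
  intros v. eapply cder_eq. apply cder_conj, cder_lin. unfold lin4.
  apply injective_projections; simpl; ring.
Qed.

Lemma W_realcomp (r : pt -> R) (h : R -> R) p a1 a2 b1 b2 d :
  W (fun q => RtoC (r q)) p a1 a2 b1 b2 -> derivable_pt_lim h (r p) d ->
  W (fun q => RtoC (h (r q))) p (RtoC d * a1) (RtoC d * a2) (RtoC d * b1) (RtoC d * b2).
Proof.
  intros F H v. eapply cder_eq.
  apply (cder_realcomp (fun t => r (line p v t)) h). apply F.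
  cbv beta; rewrite line0; exact H.
  unfold lin4. ring.
Qed.

Lemma dirD_W f p a1 a2 b1 b2 v : W f p a1 a2 b1 b2 -> dirD f v p = lin4 a1 a2 b1 b2 v.
Proof.
  intros H. destruct (H v) as [H1 H2]. unfold dirD.
  apply is_derive_Reals in H1. apply is_derive_Reals in H2.
  apply is_derive_unique in H1. apply is_derive_unique in H2.
  unfold line in H1, H2. rewrite H1, H2. now destruct (lin4 a1 a2 b1 b2 v).
Qed.

Lemma W_d f p a1 a2 b1 b2 : W f p a1 a2 b1 b2 -> let d1 := Defs.d1 in let d2 := Defs.d2 in
  d1 f p = a1 /\ d2 f p = a2 /\ db1 f p = b1 /\ db2 f p = b2.
Proof.
  intros H d1 d2. unfold d1, d2, Defs.d1, Defs.d2, db1, db2. rewrite !(dirD_W _ _ _ _ _ _ _ H).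
  unfold lin4, e1, e2, ie1, ie2; simpl.
  assert (E1 : Cconj (RtoC 1) = 1) by (apply injective_projections; simpl; ring).
  assert (E0 : Cconj (RtoC 0) = 0) by (apply injective_projections; simpl; ring).
  assert (Ei : Cconj Ci = (- Ci)%C) by (apply injective_projections; simpl; ring).
  rewrite E1, E0, Ei.
  assert (Ci2 : (Ci * Ci = - 1)%C) by (apply injective_projections; simpl; ring).
  destruct a1, a2, b1, b2; repeat split; apply injective_projections; unfold Ci; simpl; field.
Qed.

Definition O2 : pt := (RtoC 0, RtoC 0).

Lemma loc_nz_1 (c w : C) : c <> RtoC 0 ->
  locally 0 (fun t : R => (c + RtoC t * w)%C <> RtoC 0).
Proof.
  intros Hc. apply Cmod_gt_0 in Hc.
  assert (Hp : 0 < Cmod c / (Cmod w + 1)).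
  { apply Rdiv_lt_0_compat; auto. pose proof (Cmod_ge_0 w); lra. }
  exists (mkposreal _ Hp). intros y Hy E.
  change (Rabs (y - 0) < Cmod c / (Cmod w + 1)) in Hy.
  rewrite Rminus_0_r in Hy.
  assert (Ec : c = (- (RtoC y * w))%C).
  { replace c with ((c + RtoC y * w) - RtoC y * w)%C by ring. rewrite E. ring. }
  assert (Cmod c = Rabs y * Cmod w).
  { rewrite Ec. replace (- (RtoC y * w))%C with (RtoC (-1) * (RtoC y * w))%C.
    rewrite !Cmod_mult, !Cmod_R. assert (Rabs (-1) = 1) as -> by (rewrite Rabs_left; lra). ring.
    apply injective_projections; simpl; ring. }
  pose proof (Cmod_ge_0 w).
  assert (Rabs y * (Cmod w + 1) < Cmod c).
  { apply Rmult_lt_reg_r with (/ (Cmod w + 1)). apply Rinv_0_lt_compat; lra.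
    rewrite Rmult_assoc, Rinv_r by lra. rewrite Rmult_1_r. exact Hy. }
  pose proof (Rabs_pos y). nra.
Qed.

Lemma loc_nz p v : p <> O2 -> locally 0 (fun t => line p v t <> O2).
Proof.
  intros Hp. destruct p as [p1 p2].
  destruct (Ceq_dec p1 (RtoC 0)) as [E1|E1].
  - assert (E2 : p2 <> RtoC 0) by (intro; apply Hp; subst; reflexivity).
    destruct (loc_nz_1 p2 (snd v) E2) as [e He]. exists e. intros y Hy E.
    apply (He y Hy). unfold line in E. apply (f_equal snd) in E. exact E.
  - destruct (loc_nz_1 p1 (fst v) E1) as [e He]. exists e. intros y Hy E.
    apply (He y Hy). unfold line in E. apply (f_equal fst) in E. exact E.
Qed.

Lemma W_ext_nz f g p a1 a2 b1 b2 : (forall q, q <> O2 -> f q = g q) -> p <> O2 ->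
  W f p a1 a2 b1 b2 -> W g p a1 a2 b1 b2.
Proof.
  intros E Hp H v. eapply cder_ext_loc; [|apply H].
  destruct (loc_nz p v Hp) as [e He]. exists e. intros y Hy. apply E, He, Hy.
Qed.

Lemma norm2_C q : RtoC (norm2 q) = (fst q * Cconj (fst q) + snd q * Cconj (snd q))%C.
Proof. unfold norm2. rewrite RtoC_plus, !Cmod2_conj. reflexivity. Qed.

Ltac Wsolve := apply injective_projections; simpl; ring.

Lemma W_norm2 p : W (fun q => RtoC (norm2 q)) p (Cconj (fst p)) (Cconj (snd p)) (fst p) (snd p).
Proof.
  eapply W_ext. intros q; symmetry; apply norm2_C.
  eapply W_eq. apply W_plus; apply W_mult; (apply W_fst || apply W_snd || apply W_cfst || apply W_csnd).
  all: cbv beta; ring.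
Qed.

Lemma W_brk lam p : W (fun q => brk q lam) p (fst lam) (snd lam) 0 0.
Proof.
  unfold brk. eapply W_eq. apply W_plus; apply W_mult; (apply W_fst || apply W_snd || apply W_const).
  all: cbv beta; ring.
Qed.

Lemma W_hbrk lam p : W (fun q => hbrk q lam) p 0 0 (snd lam) (- fst lam).
Proof.
  unfold hbrk. eapply W_eq. apply W_plus; apply W_mult; try apply W_opp; (apply W_cfst || apply W_csnd || apply W_const).
  all: cbv beta; ring.
Qed.

Lemma norm2_pos p : p <> O2 -> 0 < norm2 p.
Proof.
  intros Hp. destruct p as [p1 p2]. unfold norm2; simpl.
  destruct (Ceq_dec p1 (RtoC 0)) as [E1|E1].
  - assert (E2 : p2 <> RtoC 0) by (intro; apply Hp; subst; reflexivity).
    apply Cmod_gt_0 in E2. pose proof (pow2_ge_0 (Cmod p1)). nra.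
  - apply Cmod_gt_0 in E1. pose proof (pow2_ge_0 (Cmod p2)). nra.
Qed.

Definition cc (k l j : nat) : R := factR (k + l - j) / (factR j * factR (k - j) * factR (l - j)).
Definition Acoef (k l : nat) : R := factR k * factR l / factR (k + l).
Definition FF (N : R) (k l : nat) (r : R) : R :=
  Acoef k l * sum_f_R0 (fun j => cc k l j * (N / r) ^ j) (Nat.min k l).
Definition FF1 (N : R) (k l : nat) (r : R) : R :=
  Acoef k l * sum_f_R0 (fun j => cc k l j * (- INR j / r) * (N / r) ^ j) (Nat.min k l).
Definition FF2 (N : R) (k l : nat) (r : R) : R :=
  Acoef k l * sum_f_R0 (fun j => cc k l j * (INR j * (INR j + 1) / r ^ 2) * (N / r) ^ j) (Nat.min k l).

Lemma phiCoef_FF N k l u : phiCoef N k l u = FF N k l (norm2 u).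
Proof. reflexivity. Qed.

Lemma Dsum (g dg : nat -> R -> R) x n :
  (forall j, derivable_pt_lim (g j) x (dg j x)) ->
  derivable_pt_lim (fun r => sum_f_R0 (fun j => g j r) n) x (sum_f_R0 (fun j => dg j x) n).
Proof.
  intros H. induction n; simpl.
  - apply H.
  - apply Dplus; auto.
Qed.


Lemma DFF N k l x : 0 < x -> derivable_pt_lim (FF N k l) x (FF1 N k l x).
Proof.
  intros Hx. unfold FF, FF1.
  apply (Dext (fun r => Acoef k l * sum_f_R0 (fun j => cc k l j * (N / r) ^ j) (Nat.min k l))).
  reflexivity.
  eapply Deq. apply Dmult. apply Dconst.
  apply (Dsum (fun j r => cc k l j * (N / r) ^ j) (fun j r => cc k l j * (- INR j / r) * (N / r) ^ j)).
  intros j. apply is_derive_Reals. auto_derive. lra.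
  destruct j; [simpl; field; lra|]. rewrite !S_INR. simpl Nat.pred. simpl pow. unfold Rdiv. field; lra.
  cbv beta; ring.
Qed.

Lemma DFF1 N k l x : 0 < x -> derivable_pt_lim (FF1 N k l) x (FF2 N k l x).
Proof.
  intros Hx. unfold FF1, FF2.
  apply (Dext (fun r => Acoef k l * sum_f_R0 (fun j => cc k l j * (- INR j / r) * (N / r) ^ j) (Nat.min k l))).
  reflexivity.
  eapply Deq. apply Dmult. apply Dconst.
  apply (Dsum (fun j r => cc k l j * (- INR j / r) * (N / r) ^ j)
              (fun j r => cc k l j * (INR j * (INR j + 1) / r ^ 2) * (N / r) ^ j)).
  intros j. apply is_derive_Reals. auto_derive. lra.
  destruct j; [simpl; field; lra|]. rewrite !S_INR. simpl Nat.pred. simpl pow. unfold Rdiv. field; lra.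
  cbv beta; ring.
Qed.

From Stdlib Require Import Lia Factorial.

Lemma factR_S n : factR (S n) = INR (S n) * factR n.
Proof. unfold factR. change (fact (S n)) with (S n * fact n)%nat. rewrite mult_INR. reflexivity. Qed.

Lemma factR_pos n : 0 < factR n.
Proof. unfold factR. apply lt_0_INR. apply lt_O_fact. Qed.

Lemma cc_rec k l j : (j < k)%nat -> (j < l)%nat ->
  cc k l (S j) * INR (S j) * (INR j - INR k - INR l) = - cc k l j * (INR j - INR k) * (INR j - INR l).
Proof.
  intros Hk Hl.
  destruct (Nat.le_exists_sub (S j) k) as [a [Ha _]]; [lia|].
  destruct (Nat.le_exists_sub (S j) l) as [b [Hb _]]; [lia|].
  subst k l. unfold cc.
  replace (a + S j + (b + S j) - S j)%nat with (S (j + a + b)) by lia.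
  replace (a + S j + (b + S j) - j)%nat with (S (S (j + a + b))) by lia.
  replace (a + S j - S j)%nat with a by lia.
  replace (b + S j - S j)%nat with b by lia.
  replace (a + S j - j)%nat with (S a) by lia.
  replace (b + S j - j)%nat with (S b) by lia.
  rewrite !factR_S.
  pose proof (factR_pos (j + a + b)). pose proof (factR_pos j).
  pose proof (factR_pos a). pose proof (factR_pos b).
  rewrite !S_INR, !plus_INR, !S_INR.
  pose proof (pos_INR j). pose proof (pos_INR a). pose proof (pos_INR b).
  field. repeat split; lra.
Qed.

Lemma telescope k l y :
  sum_f_R0 (fun j => cc k l j * y ^ j *
     (INR j * (INR j - 1 - INR k - INR l) + y * (INR j - INR k) * (INR j - INR l)))
     (Nat.min k l) = 0.
Proof.
  set (m := Nat.min k l).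
  assert (forall n, (n <= m)%nat ->
    sum_f_R0 (fun j => cc k l j * y ^ j *
     (INR j * (INR j - 1 - INR k - INR l) + y * (INR j - INR k) * (INR j - INR l))) n
    = cc k l n * y ^ n * (y * (INR n - INR k) * (INR n - INR l))).
  { induction n; intros Hn.
    - simpl. ring.
    - rewrite tech5. rewrite IHn by lia.
      assert (Hr := cc_rec k l n ltac:(lia) ltac:(lia)).
      rewrite S_INR in *. simpl pow.
      transitivity (cc k l (S n) * (y * y ^ n) * (y * (INR n + 1 - INR k) * (INR n + 1 - INR l))
        + y * y ^ n * (cc k l (S n) * (INR n + 1) * (INR n - INR k - INR l)
                       + cc k l n * (INR n - INR k) * (INR n - INR l))). ring.
      rewrite Hr; ring. }
  rewrite H by lia.
  unfold m. destruct (Nat.min_spec k l) as [[_ E]|[_ E]]; rewrite E; ring.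
Qed.

Lemma sum_lin3 a b c (A B Cc : nat -> R) n :
  a * sum_f_R0 A n + b * sum_f_R0 B n + c * sum_f_R0 Cc n =
  sum_f_R0 (fun j => a * A j + b * B j + c * Cc j) n.
Proof. induction n; simpl. ring. rewrite <- IHn. ring. Qed.

Lemma radial_ode N k l r : 0 < r ->
  r * FF2 N k l r + (FF1 N k l r + FF1 N k l r + INR k * FF1 N k l r + INR l * FF1 N k l r)
  + N / r ^ 2 * (r * (r * FF2 N k l r + FF1 N k l r + INR l * FF1 N k l r)
                 + INR k * (r * FF1 N k l r + INR l * FF N k l r)) = 0.
Proof.
  intros Hr. unfold FF, FF1, FF2.
  set (y := N / r).
  transitivity (Acoef k l / r * (
    (r * r * (1 + y)) * sum_f_R0 (fun j => cc k l j * (INR j * (INR j + 1) / r ^ 2) * y ^ j) (Nat.min k l)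
    + (r * (1 + 1 + INR k + INR l + y * (1 + INR k + INR l))) *
        sum_f_R0 (fun j => cc k l j * (- INR j / r) * y ^ j) (Nat.min k l)
    + (y * INR k * INR l) * sum_f_R0 (fun j => cc k l j * y ^ j) (Nat.min k l))).
  { unfold y. field. lra. }
  rewrite sum_lin3.
  rewrite (sum_eq _ (fun j => cc k l j * y ^ j *
     (INR j * (INR j - 1 - INR k - INR l) + y * (INR j - INR k) * (INR j - INR l)))).
  - rewrite telescope. ring.
  - intros j _. field. lra.
Qed.

Definition B1 N lam k l (q : pt) : C :=
  (RtoC (FF1 N k l (norm2 q)) * fst q * (brk q lam ^ k * hbrk q lam ^ l)
   + RtoC (FF N k l (norm2 q)) * (brk q lam ^ k * (RtoC (INR l) * hbrk q lam ^ Nat.pred l * snd lam)))%C.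
Definition B2 N lam k l (q : pt) : C :=
  (RtoC (FF1 N k l (norm2 q)) * snd q * (brk q lam ^ k * hbrk q lam ^ l)
   + RtoC (FF N k l (norm2 q)) * (brk q lam ^ k * (RtoC (INR l) * hbrk q lam ^ Nat.pred l * (- fst lam))))%C.
Definition EB N lam k l (q : pt) : C :=
  (Cconj (fst q) * B1 N lam k l q + Cconj (snd q) * B2 N lam k l q)%C.

Ltac Wauto HD HD1 :=
  repeat first [ apply W_const | apply W_fst | apply W_snd | apply W_cfst | apply W_csnd
               | apply W_brk | apply W_hbrk | apply W_norm2
               | eapply W_plus | eapply W_opp | eapply W_mult | eapply W_pow
               | eapply W_realcomp; [apply W_norm2 | first [apply HD | apply HD1] ] ].

Lemma W_phi N lam k l q : q <> O2 ->
  exists a1 a2, W (phi N lam k l) q a1 a2 (B1 N lam k l q) (B2 N lam k l q).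
Proof.
  intros Hq. pose proof (norm2_pos q Hq) as Hr.
  pose proof (DFF N k l (norm2 q) Hr) as HD.
  eexists; eexists.
  eapply W_ext with (f := fun q => (RtoC (FF N k l (norm2 q)) * (brk q lam ^ k * hbrk q lam ^ l))%C).
  reflexivity.
  eapply W_eq. Wauto HD HD. all: try reflexivity.
  all: unfold B1, B2; cbv beta; ring.
Qed.

Lemma db_phi N lam k l q : q <> O2 ->
  db1 (phi N lam k l) q = B1 N lam k l q /\ db2 (phi N lam k l) q = B2 N lam k l q.
Proof.
  intros Hq. destruct (W_phi N lam k l q Hq) as [a1 [a2 H]].
  destruct (W_d _ _ _ _ _ _ H) as [_ [_ [E1 E2]]]. auto.
Qed.

Lemma EB_phi N lam k l q : q <> O2 -> EulerBar (phi N lam k l) q = EB N lam k l q.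
Proof.
  intros Hq. destruct (db_phi N lam k l q Hq) as [E1 E2].
  unfold EulerBar, EB. now rewrite E1, E2.
Qed.

Lemma RtoC_E r F F1 F2 c K L :
  RtoC (r * F2 + (F1 + F1 + K * F1 + L * F1) + c * (r * (r * F2 + F1 + L * F1) + K * (r * F1 + L * F)))
  = (RtoC r * RtoC F2 + (RtoC F1 + RtoC F1 + RtoC K * RtoC F1 + RtoC L * RtoC F1)
     + RtoC c * (RtoC r * (RtoC r * RtoC F2 + RtoC F1 + RtoC L * RtoC F1)
                 + RtoC K * (RtoC r * RtoC F1 + RtoC L * RtoC F)))%C.
Proof. apply injective_projections; simpl; ring. Qed.

Lemma harmonic N lam k l p : p <> O2 -> BurnsLaplacian N (phi N lam k l) p = RtoC 0.
Proof.
  intros Hp. pose proof (norm2_pos p Hp) as Hr.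
  pose proof (DFF N k l (norm2 p) Hr) as HD.
  pose proof (DFF1 N k l (norm2 p) Hr) as HD1.
  eassert (H1 : W (B1 N lam k l) p _ _ _ _). { unfold B1. Wauto HD HD1. }
  eassert (H2 : W (B2 N lam k l) p _ _ _ _). { unfold B2. Wauto HD HD1. }
  eassert (H3 : W (EB N lam k l) p _ _ _ _). { unfold EB, B1, B2. Wauto HD HD1. }
  apply (W_ext_nz _ (db1 (phi N lam k l))) in H1; [|intros q Hq; symmetry; apply (db_phi N lam k l q Hq)|exact Hp].
  apply (W_ext_nz _ (db2 (phi N lam k l))) in H2; [|intros q Hq; symmetry; apply (db_phi N lam k l q Hq)|exact Hp].
  apply (W_ext_nz _ (EulerBar (phi N lam k l))) in H3; [|intros q Hq; symmetry; apply (EB_phi N lam k l q Hq)|exact Hp].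
  destruct (W_d _ _ _ _ _ _ H1) as [E1 _].
  destruct (W_d _ _ _ _ _ _ H2) as [_ [E2 _]].
  destruct (W_d _ _ _ _ _ _ H3) as [E3 [E4 _]].
  unfold BurnsLaplacian. cbv zeta in E1, E2, E3, E4. rewrite E1, E2, E3, E4.
  clear E1 E2 E3 E4 H1 H2 H3.
  cbv beta.
  set (r := norm2 p) in *.
  transitivity (RtoC (2 / (1 + N / r)) * (RtoC (r * FF2 N k l r + (FF1 N k l r + FF1 N k l r + INR k * FF1 N k l r + INR l * FF1 N k l r)
  + N / r ^ 2 * (r * (r * FF2 N k l r + FF1 N k l r + INR l * FF1 N k l r)
                 + INR k * (r * FF1 N k l r + INR l * FF N k l r))) * (brk p lam ^ k * hbrk p lam ^ l)))%C.
  2: { rewrite radial_ode by exact Hr. ring. }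
  rewrite RtoC_E.
  assert (Er : RtoC r = (fst p * Cconj (fst p) + snd p * Cconj (snd p))%C) by apply norm2_C.
  rewrite Er.
  set (F0 := FF N k l r). set (F1 := FF1 N k l r). set (F2 := FF2 N k l r).
  set (c := N / r ^ 2).
  destruct k as [|k']; destruct l as [|l']; cbn [Nat.pred Cpow]; try (cbn [INR]);
  unfold brk, hbrk; ring.
Qed.


Lemma cc_nonneg k l j : 0 <= cc k l j.
Proof.
  unfold cc. pose proof (factR_pos (k + l - j)). pose proof (factR_pos j).
  pose proof (factR_pos (k - j)). pose proof (factR_pos (l - j)).
  apply Rlt_le, Rdiv_lt_0_compat; auto. repeat apply Rmult_lt_0_compat; auto.
Qed.

Lemma Acc0 k l : Acoef k l * cc k l 0 = 1.
Proof.
  unfold Acoef, cc. rewrite !Nat.sub_0_r.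
  assert (factR 0 = 1) as -> by reflexivity.
  pose proof (factR_pos (k + l)). pose proof (factR_pos k). pose proof (factR_pos l).
  field. lra.
Qed.

Lemma sum_bound k l N n2 n : 0 < N -> 1 <= n2 ->
  0 <= sum_f_R0 (fun j => cc k l j * (N / n2) ^ j) n - cc k l 0 <=
  sum_f_R0 (fun j => cc k l j * N ^ j) n / n2.
Proof.
  intros HN Hn. induction n.
  - simpl. pose proof (cc_nonneg k l 0).
    assert (0 <= cc k l 0 * 1 / n2) by (apply Rmult_le_pos; [lra| left; apply Rinv_0_lt_compat; lra]).
    split; lra.
  - rewrite !tech5. pose proof (cc_nonneg k l (S n)) as Hc.
    assert (Hy : 0 <= (N / n2) ^ S n <= N ^ S n / n2).
    { split. apply pow_le. apply Rlt_le, Rdiv_lt_0_compat; lra.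
      unfold Rdiv. rewrite Rpow_mult_distr, pow_inv.
      assert (1 <= n2 ^ n) by (apply pow_R1_Rle; lra).
      assert (0 < N ^ S n) by (apply pow_lt; lra).
      simpl (n2 ^ S n).
      apply Rmult_le_compat_l. lra.
      apply Rinv_le_contravar. lra. nra. }
    destruct IHn as [I1 I2].
    split.
    + pose proof (Rmult_le_pos _ _ Hc (proj1 Hy)). lra.
    + assert (cc k l (S n) * (N / n2) ^ S n <= cc k l (S n) * N ^ S n / n2).
      { unfold Rdiv at 2. rewrite Rmult_assoc. apply Rmult_le_compat_l; auto. apply Hy. }
      unfold Rdiv in *. lra.
Qed.

Lemma asympt N lam k l : 0 < N ->
  exists (K R0 : R), 0 < R0 /\
     forall u : pt, R0 <= normu u ->
       Cmod (phi N lam k l u - mono lam k l u)%C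
         <= K / normu u ^ 2 * Cmod (mono lam k l u).
Proof.
  intros HN.
  exists (Acoef k l * sum_f_R0 (fun j => cc k l j * N ^ j) (Nat.min k l)), 1.
  split; [lra|]. intros u Hu.
  assert (Hn2 : normu u ^ 2 = norm2 u).
  { unfold normu. simpl. rewrite Rmult_1_r. apply sqrt_sqrt. unfold norm2.
    pose proof (pow2_ge_0 (Cmod (fst u))). pose proof (pow2_ge_0 (Cmod (snd u))). lra. }
  rewrite Hn2.
  assert (H1 : 1 <= norm2 u) by (rewrite <- Hn2; nra).
  assert (E : (phi N lam k l u - mono lam k l u)%C = (RtoC (phiCoef N k l u - 1) * mono lam k l u)%C).
  { unfold phi. rewrite RtoC_minus. ring. }
  rewrite E, Cmod_mult, Cmod_R.
  apply Rmult_le_compat_r. apply Cmod_ge_0.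
  rewrite phiCoef_FF. unfold FF.
  destruct (sum_bound k l N (norm2 u) (Nat.min k l) HN H1) as [B1 B2].
  pose proof (Acc0 k l) as A0.
  assert (HA : 0 < Acoef k l).
  { unfold Acoef. pose proof (factR_pos (k + l)). pose proof (factR_pos k). pose proof (factR_pos l).
    apply Rdiv_lt_0_compat; auto. apply Rmult_lt_0_compat; auto. }
  set (S := sum_f_R0 (fun j => cc k l j * (N / norm2 u) ^ j) (Nat.min k l)) in *.
  set (T := sum_f_R0 (fun j => cc k l j * N ^ j) (Nat.min k l)) in *.
  replace (Acoef k l * S - 1) with (Acoef k l * (S - cc k l 0)) by lra.
  rewrite Rabs_pos_eq by (apply Rmult_le_pos; lra).
  unfold Rdiv in *. rewrite Rmult_assoc. apply Rmult_le_compat_l; lra.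
Qed.

Lemma N0 lam k l u : phi 0 lam k l u = mono lam k l u.
Proof.
  unfold phi. rewrite phiCoef_FF. unfold FF.
  assert (forall n, sum_f_R0 (fun j => cc k l j * (0 / norm2 u) ^ j) n = cc k l 0).
  { induction n. simpl. ring. rewrite tech5, IHn. unfold Rdiv. simpl. ring. }
  rewrite H, Acc0. ring.
Qed.


Definition JacCore : Prop := forall (k l : nat) (x : R), (l <= k)%nat ->
  sum_f_R0 (fun s => binomR k (l - s) * binomR l s * x ^ s * (1 + x) ^ (l - s)) l
  = sum_f_R0 (fun j => cc k l j * x ^ (l - j)) l.

Lemma cc_sym k l j : cc k l j = cc l k j.
Proof. unfold cc. rewrite (Nat.add_comm k l). unfold Rdiv. f_equal. f_equal. ring. Qed.

Lemma jac_gen (JC : JacCore) N k l u : 0 < N -> u <> O2 -> (l <= k)%nat ->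
  FF N k l (norm2 u) = Acoef k l * / (norm2 u / N) ^ l * jacobiP l (k - l) 0 (1 + 2 * (norm2 u / N)).
Proof.
  intros HN Hu Hlk. pose proof (norm2_pos u Hu) as Hr.
  set (x := norm2 u / N).
  assert (Hx : 0 < x) by (unfold x; apply Rdiv_lt_0_compat; lra).
  unfold jacobiP.
  replace (l + (k - l))%nat with k by lia. replace (l + 0)%nat with l by lia.
  rewrite (sum_eq _ (fun s => binomR k (l - s) * binomR l s * x ^ s * (1 + x) ^ (l - s))).
  2: { intros i _. replace ((1 + 2 * x - 1) / 2) with x by field. replace ((1 + 2 * x + 1) / 2) with (1 + x) by field. reflexivity. }
  rewrite JC by lia.
  unfold FF. rewrite Nat.min_r by lia.
  rewrite Rmult_assoc. f_equal.
  transitivity (sum_f_R0 (fun j => cc k l j * x ^ (l - j) * / x ^ l) l).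
  2: { rewrite scal_sum. ring. }
  apply sum_eq. intros j Hj.
  replace (N / norm2 u) with (/ x) by (unfold x; field; lra).
  replace (x ^ l) with (x ^ (l - j) * x ^ j).
  2: { rewrite <- pow_add. f_equal. lia. }
  rewrite pow_inv. field. split; apply pow_nonzero; lra.
Qed.

Lemma FF_sym N k l r : FF N k l r = FF N l k r.
Proof.
  unfold FF, Acoef. rewrite Nat.min_comm, Nat.add_comm.
  rewrite (sum_eq (fun j => cc k l j * _) (fun j => cc l k j * (N / r) ^ j)).
  rewrite (Rmult_comm (factR k) (factR l)); reflexivity. intros; rewrite cc_sym; reflexivity.
Qed.

Lemma jacobi_part (JC : JacCore) N lam k l : 0 < N ->
  (forall u : pt, u <> (RtoC 0, RtoC 0) ->
     let chi := norm2 u / N in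
     ((l <= k)%nat ->
        phi N lam k l u =
        (RtoC (factR k * factR l / factR (k + l) * / chi ^ l
               * jacobiP l (k - l) 0 (1 + 2 * chi)) * mono lam k l u)%C) /\
     ((k < l)%nat ->
        phi N lam k l u =
        (RtoC (factR k * factR l / factR (k + l) * / chi ^ k
               * jacobiP k (l - k) 0 (1 + 2 * chi)) * mono lam k l u)%C)).
Proof.
  intros HN u Hu chi. split; intros H; unfold phi; f_equal; f_equal; rewrite phiCoef_FF.
  - apply (jac_gen JC); auto.
  - rewrite FF_sym, (jac_gen JC) by (auto; lia). unfold Acoef.
    rewrite Nat.add_comm. f_equal. f_equal. rewrite (Rmult_comm (factR l)). reflexivity.
Qed.

Module Jac.
From HB Require Import structures.
From mathcomp Require Import all_boot all_algebra.
From mathcomp Require Import Rstruct.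
From mathcomp Require Import ring zify.
Import GRing.Theory Num.Theory.
Local Open Scope ring_scope.

Lemma fact_nz n : (n`!%:R : R) != 0.
Proof. by rewrite pnatr_eq0 -lt0n fact_gt0. Qed.

Lemma binR n m : (m <= n)%N -> ('C(n, m)%:R : R) = n`!%:R / (m`!%:R * (n - m)`!%:R).
Proof.
  move=> h. rewrite -(bin_fact h) !natrM. field.
  by rewrite !fact_nz.
Qed.

Arguments binR {n m}.

Lemma trinom l m i : (i <= m)%N -> (m <= l)%N ->
  ('C(l, m) * 'C(m, i) = 'C(l, i) * 'C(l - i, l - m))%N.
Proof.
  move=> him hml. apply/eqP. rewrite -(eqr_nat R) !natrM.
  rewrite (binR hml) (binR him) (binR (leq_trans him hml)) (@binR (l - i) (l - m)); last by lia.
  have -> : (l - i - (l - m) = m - i)%N by lia.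
  apply/eqP. field. by rewrite !fact_nz.
Qed.

Lemma coefid k l i : (i <= l)%N ->
  (\sum_(m < l.+1) 'C(k, m) * 'C(l, m) * 'C(m, i) = 'C(l, i) * 'C(k + (l - i), l))%N.
Proof.
  move=> hil. rewrite -binomial.Vandermonde big_distrr /=. apply: eq_bigr => m _.
  have hm : (m <= l)%N by rewrite -ltnS.
  case: (ltnP m i) => h.
  - rewrite (bin_small h) muln0 (@bin_small (l - i) (l - m)); last by lia.
    by rewrite !muln0.
  - by rewrite -mulnA trinom //; lia.
Qed.

Lemma expand_m (x : R) m l : (m <= l)%N ->
  x ^+ (l - m) * (1 + x) ^+ m = \sum_(i < l.+1) ('C(m, i))%:R * x ^+ (l - i).
Proof.
  move=> hml. rewrite addrC exprDn mulr_sumr.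
  rewrite (big_ord_widen l.+1 (fun i => x ^+ (l - m) * (x ^+ (m - i) * 1 ^+ i *+ 'C(m, i)))); last by [].
  rewrite big_mkcond. apply: eq_bigr => i _. case: ifP => h.
  - rewrite expr1n mulr1 mulrnAr -exprD mulr_natl.
    have -> : (l - m + (m - i) = l - i)%N by lia.
    by [].
  - have h' : (m < i)%N by lia.
    by rewrite bin_small // mul0r.
Qed.

Lemma core (x : R) k l : (l <= k)%N ->
  \sum_(s < l.+1) ('C(k, l - s) * 'C(l, s))%:R * x ^+ s * (1 + x) ^+ (l - s)
  = \sum_(i < l.+1) ('C(l, i) * 'C(k + (l - i), l))%:R * x ^+ (l - i).
Proof.
  move=> hlk. rewrite (reindex_inj rev_ord_inj) /=.
  transitivity (\sum_(m < l.+1) ('C(k, m) * 'C(l, m))%:R * (x ^+ (l - m) * (1 + x) ^+ m)).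
  { apply: eq_bigr => m _. have hm : (m <= l)%N by rewrite -ltnS.
    rewrite subSS subKn // bin_sub //. by rewrite mulrA. }
  transitivity (\sum_(m < l.+1) \sum_(i < l.+1) ('C(k, m) * 'C(l, m) * 'C(m, i))%:R * x ^+ (l - i)).
  { apply: eq_bigr => m _. have hm : (m <= l)%N by rewrite -ltnS.
    rewrite expand_m // mulr_sumr. apply: eq_bigr => i _. by rewrite !natrM !mulrA. }
  rewrite exchange_big /=. apply: eq_bigr => i _. have hi : (i <= l)%N by rewrite -ltnS.
  rewrite -mulr_suml -natr_sum coefid //.
Qed.

Lemma binomRE n m : (m <= n)%N -> binomR n m = ('C(n, m)%:R : R).
Proof. move=> h. by rewrite (binR h) /binomR /factR !INRE !factE RdivE RmultE. Qed.

Lemma ccE k l j : (j <= l)%N -> (l <= k)%N -> cc k l j = (('C(l, j) * 'C(k + (l - j), l))%:R : R).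
Proof.
  move=> hjl hlk. rewrite natrM (binR hjl) (@binR (k + (l - j)) l); last by lia.
  rewrite /cc /factR !INRE !factE RdivE !RmultE -?plusE -?minusE !minusE !plusE.
  have -> : (k + (l - j) - l = k - j)%N by lia.
  have -> : (k + l - j = k + (l - j))%N by lia.
  field. by rewrite !fact_nz.
Qed.

Lemma jac_core_R (k l : nat) (x : R) : (l <= k)%N ->
  sum_f_R0 (fun s => Rmult (Rmult (Rmult (binomR k (l - s)) (binomR l s)) (pow x s)) (pow (Rplus 1 x) (l - s))) l
  = sum_f_R0 (fun j => Rmult (cc k l j) (pow x (l - j))) l.
Proof.
  move=> hlk. rewrite !sum_f_R0E !big_mkord.
  transitivity (\sum_(s < l.+1) ('C(k, l - s) * 'C(l, s))%:R * x ^+ s * (1 + x) ^+ (l - s)).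
  { apply: eq_bigr => s _. have hs : (s <= l)%N by rewrite -ltnS.
    rewrite !binomRE; try lia. by rewrite !RmultE !RpowE RplusE natrM. }
  rewrite core //. apply: eq_bigr => j _. have hj : (j <= l)%N by rewrite -ltnS.
  by rewrite ccE // RmultE RpowE.
Qed.
End Jac.


Lemma jac_core : JacCore.
Proof. intros k l x H. exact (Jac.jac_core_R k l x (ssrbool.introT ssrnat.leP H)). Qed.

Theorem mainTheorem5 (N : R) (lam : pt) (k l : nat) :
  0 < N ->
  (* harmonicity on C^2 \ {0} *)
  (forall u : pt, u <> (RtoC 0, RtoC 0) ->
     BurnsLaplacian N (phi N lam k l) u = RtoC 0) /\
  (* phi = [u lam]^k [hat u lam]^l (1 + O(|u|^-2)) as |u| -> oo *)
  (exists (K R0 : R), 0 < R0 /\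
     forall u : pt, R0 <= normu u ->
       Cmod (phi N lam k l u - mono lam k l u)%C
         <= K / normu u ^ 2 * Cmod (mono lam k l u)) /\
  (* reduction at N = 0 *)
  (forall u : pt, u <> (RtoC 0, RtoC 0) -> phi 0 lam k l u = mono lam k l u) /\
  (* Jacobi form, chi = |u|^2 / N *)
  (forall u : pt, u <> (RtoC 0, RtoC 0) ->
     let chi := norm2 u / N in
     ((l <= k)%nat ->
        phi N lam k l u =
        (RtoC (factR k * factR l / factR (k + l) * / chi ^ l
               * jacobiP l (k - l) 0 (1 + 2 * chi)) * mono lam k l u)%C) /\
     ((k < l)%nat ->
        phi N lam k l u =
        (RtoC (factR k * factR l / factR (k + l) * / chi ^ k
               * jacobiP k (l - k) 0 (1 + 2 * chi)) * mono lam k l u)%C)).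
Proof.
  intros HN. split; [|split; [|split]].
  - intros u Hu. apply harmonic. exact Hu.
  - apply asympt; auto.
  - intros u _. apply N0.
  - apply (jacobi_part jac_core); auto.
Qed.
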